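(* Let $R$ be an affine algebra over a field $K$ with no zero divisors which is not amenable. Then there exist a finite-dimensional $K$-subspace $Z\subseteq R$ and $\epsilon>0$ such that for every nonzero finite-dimensional $K$-subspace $V\subseteq R$, $$\frac{\dim_K(VZ+V)}{\dim_K(V)}>1+\epsilon.$$
   Context: An affine algebra is a finitely generated associative algebra over $K$, not necessarily unital. For subspaces $V,Z$, $VZ$ denotes the $K$-span of all products $vz$, $v\in V$, $z\in Z$. $R$ is amenable if there exist finite-dimensional $K$-subspaces $W_1\subseteq W_2\subseteq\cdots$ with $\bigcup_nW_n=R$ such that for every $r\in R$, $\lim_{n\to\infty}\dim_K(W_nr+W_n)/\dim_K(W_n)=1$. *)

(* Defs.v *)
From HB Require Import structures.
From mathcomp Require Import all_boot all_order all_algebra.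
From Stdlib Require Import ClassicalEpsilon.
From Stdlib Require Reals.
Notation R := Rdefinitions.R.
Notation Rlt := Rdefinitions.Rlt.
Notation R0 := Rdefinitions.R0.
Notation R1 := Rdefinitions.R1.
Notation Rplus := Rdefinitions.Rplus.
Notation Rminus := Rdefinitions.Rminus.
Notation Rdiv := Rdefinitions.Rdiv.
Notation Rabs := Rbasic_fun.Rabs.
Notation INR := Raxioms.INR.
Set Implicit Arguments. Unset Strict Implicit. Unset Printing Implicit Defensive.
Import GRing.Theory.
Local Open Scope ring_scope.

Section Defs.
Variables (K : fieldType) (A : lmodType K) (mul : A -> A -> A).

Definition is_assoc_algebra : Prop :=
  [/\ (forall x y z, mul x (mul y z) = mul (mul x y) z),
      (forall x y z, mul (x + y) z = mul x z + mul y z),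
      (forall x y z, mul x (y + z) = mul x y + mul x z)
    & (forall (a : K) x y, mul (a *: x) y = a *: mul x y /\ mul x (a *: y) = a *: mul x y)].

Definition is_subspace (S : A -> Prop) : Prop :=
  [/\ S 0, (forall x y, S x -> S y -> S (x + y)) & (forall (a : K) x, S x -> S (a *: x))].

Definition is_subalgebra (S : A -> Prop) : Prop :=
  is_subspace S /\ (forall x y, S x -> S y -> S (mul x y)).

Definition affine_algebra : Prop :=
  is_assoc_algebra /\
  exists gens : seq A, forall S, is_subalgebra S ->
    (forall g, g \in gens -> S g) -> forall x, S x.

Definition no_zero_divisors : Prop :=
  forall x y, mul x y = 0 -> x = 0 \/ y = 0.

Definition lincomb (s : seq A) (c : seq K) : A := \sum_(i < size s) c`_i *: s`_i.

Definition free_seq (s : seq A) : Prop :=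
  forall c : seq K, lincomb s c = 0 -> forall i, (i < size s)%N -> c`_i = 0.

Definition spans (s : seq A) (S : A -> Prop) : Prop :=
  forall x, S x <-> exists c : seq K, x = lincomb s c.

Definition has_dim (S : A -> Prop) (n : nat) : Prop :=
  exists s : seq A, [/\ size s = n, free_seq s & spans s S].

Definition fin_dim (S : A -> Prop) : Prop := exists n, has_dim S n.

(* dim_K S (meaningful for finite-dimensional S; dimension is unique) *)
Definition dimK (S : A -> Prop) : nat :=
  epsilon (inhabits 0%N) (has_dim S).

Definition prod_space (V Z : A -> Prop) : A -> Prop :=
  fun x => exists s : seq (A * A),
    (forall p, p \in s -> V p.1 /\ Z p.2) /\ x = \sum_(p <- s) mul p.1 p.2.

Definition sum_space (V W : A -> Prop) : A -> Prop :=
  fun x => exists v w, [/\ V v, W w & x = v + w].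

Definition rmul_space (W : A -> Prop) (r : A) : A -> Prop :=
  fun x => exists w, W w /\ x = mul w r.

Definition dim_ratio (X Y : A -> Prop) : R :=
  Rdiv (INR (dimK X)) (INR (dimK Y)).

Definition amenable : Prop :=
  exists W : nat -> (A -> Prop),
    [/\ (forall n, fin_dim (W n)),
        (forall n x, W n x -> W n.+1 x),
        (forall x, exists n, W n x)
      & (forall r : A, forall e : R, Rlt R0 e -> exists N : nat, forall n : nat,
           (N <= n)%N ->
           Rlt (Rabs (Rminus (dim_ratio (sum_space (rmul_space (W n) r) (W n)) (W n)) R1)) e)].

End Defs.

(* Main.v *)
Require Import Defs.
From HB Require Import structures.
From mathcomp Require Import all_boot all_order all_algebra.
From Stdlib Require Import ClassicalEpsilon Classical.
From Stdlib Require Import Reals Lra.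
Set Implicit Arguments. Unset Strict Implicit. Unset Printing Implicit Defensive.
Import GRing.Theory.
Local Open Scope ring_scope.

Section Lin.
Variables (K : fieldType) (A : lmodType K).

Definition span (s : seq A) (x : A) : Prop := exists c : seq K, x = lincomb s c.

Lemma lincomb_nil (c : seq K) : lincomb ([::] : seq A) c = 0.
Proof. by rewrite /lincomb big_ord0. Qed.

Lemma lincomb0 (s : seq A) : lincomb s [::] = 0.
Proof. by rewrite /lincomb big1 // => i _; rewrite nth_nil scale0r. Qed.

Lemma lincomb_cons (y : A) s (c : seq K) :
  lincomb (y :: s) c = c`_0 *: y + lincomb s (behead c).
Proof.
rewrite /lincomb /= big_ord_recl /=; congr (_ + _).
by apply: eq_bigr => i _; rewrite /bump leq0n add1n nth_behead.
Qed.

Lemma span_nil x : span [::] x <-> x = 0.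
Proof.
split=> [[c ->]|->]; first by rewrite lincomb_nil.
by exists [::]; rewrite lincomb_nil.
Qed.

Lemma span_cons y s x :
  span (y :: s) x <-> exists a x', span s x' /\ x = a *: y + x'.
Proof.
split=> [[c ->]|[a [x' [[c ->] ->]]]].
  exists c`_0, (lincomb s (behead c)); split; first by exists (behead c).
  by rewrite lincomb_cons.
by exists (a :: c); rewrite lincomb_cons.
Qed.

Lemma span0 s : span s 0.
Proof. by exists [::]; rewrite lincomb0. Qed.

Lemma spanD s x y : span s x -> span s y -> span s (x + y).
Proof.
elim: s x y => [|z s IH] x y.
  by move=> /span_nil -> /span_nil ->; apply/span_nil; rewrite addr0.
move=> /span_cons [a [x' [Hx' ->]]] /span_cons [b [y' [Hy' ->]]].
apply/span_cons; exists (a + b), (x' + y'); split; first exact: IH.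
by rewrite scalerDl addrACA.
Qed.

Lemma spanZ s a x : span s x -> span s (a *: x).
Proof.
elim: s x => [|z s IH] x.
  by move=> /span_nil ->; apply/span_nil; rewrite scaler0.
move=> /span_cons [b [x' [Hx' ->]]]; apply/span_cons.
exists (a * b), (a *: x'); split; first exact: IH.
by rewrite scalerDr scalerA.
Qed.

Lemma span_mem s x : x \in s -> span s x.
Proof.
elim: s => [|y s IH]; first by rewrite in_nil.
rewrite inE => /orP [/eqP ->|Hx]; apply/span_cons.
  by exists 1, 0; split; [exact: span0 | rewrite scale1r addr0].
by exists 0, x; split; [exact: IH | rewrite scale0r add0r].
Qed.

Lemma span_sub (S : A -> Prop) s :
  S 0 -> (forall x y, S x -> S y -> S (x + y)) -> (forall a x, S x -> S (a *: x)) ->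
  (forall x, x \in s -> S x) -> forall x, span s x -> S x.
Proof.
move=> S0 SD SZ; elim: s => [|y s IH] Hs x.
  by move=> /span_nil ->.
move=> /span_cons [a [x' [Hx' ->]]]; apply: SD.
  by apply: SZ; apply: Hs; rewrite mem_head.
by apply: IH => // z Hz; apply: Hs; rewrite inE Hz orbT.
Qed.

Lemma span_trans s t : (forall x, x \in s -> span t x) -> forall x, span s x -> span t x.
Proof. by move=> H; apply: span_sub => //; [exact: span0 | exact: spanD | exact: spanZ]. Qed.

Lemma span_catl s t x : span s x -> span (s ++ t) x.
Proof. by apply: span_trans => y Hy; apply: span_mem; rewrite mem_cat Hy. Qed.

Lemma span_catr s t x : span t x -> span (s ++ t) x.
Proof. by apply: span_trans => y Hy; apply: span_mem; rewrite mem_cat Hy orbT. Qed.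

Lemma span_cat s t x :
  span (s ++ t) x <-> exists y z, [/\ span s y, span t z & x = y + z].
Proof.
split; last by move=> [y [z [Hy Hz ->]]]; apply: spanD; [exact: span_catl | exact: span_catr].
move: x; apply: (@span_sub (fun x => exists y z, [/\ span s y, span t z & x = y + z])).
- by exists 0, 0; split; [exact: span0 | exact: span0 | rewrite addr0].
- move=> x1 x2 [y1 [z1 [H1 H1' ->]]] [y2 [z2 [H2 H2' ->]]].
  by exists (y1 + y2), (z1 + z2); split; [exact: spanD | exact: spanD | rewrite addrACA].
- move=> a x1 [y1 [z1 [H1 H1' ->]]].
  by exists (a *: y1), (a *: z1); split; [exact: spanZ | exact: spanZ | rewrite scalerDr].
- move=> y; rewrite mem_cat => /orP [Hy|Hy].
    by exists y, 0; split; [exact: span_mem | exact: span0 | rewrite addr0].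
  by exists 0, y; split; [exact: span0 | exact: span_mem | rewrite add0r].
Qed.

Lemma lin0 (f : A -> A) : (forall a x, f (a *: x) = a *: f x) -> f 0 = 0.
Proof. by move=> fZ; have := fZ 0 0; rewrite !scale0r. Qed.

Lemma span_map (f : A -> A) s x :
  (forall x y, f (x + y) = f x + f y) -> (forall a x, f (a *: x) = a *: f x) ->
  span (map f s) x <-> exists y, span s y /\ x = f y.
Proof.
move=> fD fZ; have f0 := lin0 fZ; split.
  move: x; apply: (@span_sub (fun x => exists y, span s y /\ x = f y)).
  - by exists 0; split; [exact: span0 | rewrite f0].
  - move=> x1 x2 [y1 [H1 ->]] [y2 [H2 ->]].
    by exists (y1 + y2); split; [exact: spanD | rewrite fD].
  - move=> a x1 [y1 [H1 ->]].
    by exists (a *: y1); split; [exact: spanZ | rewrite fZ].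
  - move=> y /mapP [y' Hy' ->].
    by exists y'; split; [exact: span_mem | ].
move=> [y [Hy ->]]; move: y Hy; apply: span_sub.
- by rewrite f0; exact: span0.
- by move=> x1 x2 H1 H2; rewrite fD; exact: spanD.
- by move=> a x1 H1; rewrite fZ; exact: spanZ.
- by move=> y Hy; apply: span_mem; apply: map_f.
Qed.

Lemma lincomb_map (f : A -> A) s c :
  (forall x y, f (x + y) = f x + f y) -> (forall a x, f (a *: x) = a *: f x) ->
  f (lincomb s c) = lincomb (map f s) c.
Proof.
move=> fD fZ; elim: s c => [|y s IH] c; first by rewrite /= !lincomb_nil (lin0 fZ).
by rewrite /= !lincomb_cons fD fZ IH.
Qed.

End Lin.
Section Dim.
Variables (K : fieldType) (A : lmodType K).

Lemma free_nil : free_seq ([::] : seq A).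
Proof. by move=> c _ i; rewrite ltn0. Qed.

Lemma free_cons (x : A) s : free_seq s -> ~ span s x -> free_seq (x :: s).
Proof.
move=> Hs Hx c; rewrite lincomb_cons => H0.
case: (eqVneq c`_0 0) => [c0|nz]; last first.
  exfalso; apply: Hx.
  have Heq : c`_0 *: x = - lincomb s (behead c).
    by apply/eqP; rewrite -addr_eq0; apply/eqP.
  have -> : x = (c`_0)^-1 *: ((-1) *: lincomb s (behead c)).
    by rewrite scaleN1r -Heq scalerK.
  by apply: spanZ; apply: spanZ; exists (behead c).
move=> [|i] Hi; first by [].
rewrite -nth_behead; apply: (Hs (behead c)) => //.
by move: H0; rewrite c0 scale0r add0r.
Qed.

Lemma exchange (s t : seq A) :
  free_seq t -> (forall x, x \in t -> span s x) -> (size t <= size s)%nat.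
Proof.
move=> Ht Hts.
have Hc : forall j : 'I_(size t), exists c : seq K, t`_j = lincomb s c.
  by move=> j; apply: Hts; apply: mem_nth.
pose coef (j : 'I_(size t)) := epsilon (inhabits [::]) (fun c => t`_j = lincomb s c).
have Hcoef : forall j : 'I_(size t), t`_j = lincomb s (coef j).
  by move=> j; apply: (epsilon_spec (inhabits [::]) (fun c => t`_j = lincomb s c)); apply: Hc.
pose M := \matrix_(j < size t, i < size s) (coef j)`_i.
have kerM : forall x : 'rV[K]_(size t), x *m M = 0 -> x = 0.
  move=> x Hx.
  have Hl : lincomb t (mkseq (fun j => match (insub j : option 'I_(size t)) with Some k => x 0 k | None => 0 end) (size t)) = 0.
    rewrite /lincomb.
    transitivity (\sum_(j < size t) x 0 j *: t`_j).
      by apply: eq_bigr => j _; rewrite nth_mkseq // valK.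
    transitivity (\sum_(i < size s) (x *m M) 0 i *: s`_i).
      rewrite (eq_bigr (fun j => x 0 j *: \sum_(i < size s) (coef j)`_i *: s`_i)); last first.
        by move=> j _; rewrite Hcoef /lincomb.
      rewrite (eq_bigr (fun j => \sum_(i < size s) (x 0 j * (coef j)`_i) *: s`_i)); last first.
        by move=> j _; rewrite scaler_sumr; apply: eq_bigr => i _; rewrite scalerA.
      rewrite exchange_big /=; apply: eq_bigr => i _.
      rewrite mxE scaler_suml; apply: eq_bigr => j _; rewrite mxE.
      by [].
    by rewrite Hx; apply: big1 => i _; rewrite mxE scale0r.
  apply/rowP => j; rewrite !mxE.
  have := Ht _ Hl j (ltn_ord j); rewrite nth_mkseq // valK.
  by [].
have : kermx M == 0.
  apply/eqP/row_matrixP => i; rewrite row0.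
  apply: kerM; apply/eqP; rewrite -sub_kermx; exact: row_sub.
rewrite kermx_eq0 /row_free => /eqP <-; exact: rank_leq_col.
Qed.

Lemma basis_ex (s : seq A) :
  exists b, [/\ free_seq b, (forall x, span b x <-> span s x) & (size b <= size s)%nat].
Proof.
elim: s => [|y s [b [Hb Hbs Hsz]]].
  by exists [::]; split => //; exact: free_nil.
case: (classic (span b y)) => Hy.
  exists b; split => //; last exact: leqW.
  move=> x; split.
    move=> /Hbs Hx; apply/span_cons; exists 0, x; split => //.
    by rewrite scale0r add0r.
  move=> /span_cons [a [x' [Hx' ->]]]; apply: spanD; first exact: spanZ.
  exact/Hbs.
exists (y :: b); split => //; first exact: free_cons.
move=> x; split.
  move=> /span_cons [a [x' [Hx' ->]]]; apply/span_cons; exists a, x'; split => //.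
  exact/Hbs.
move=> /span_cons [a [x' [Hx' ->]]]; apply/span_cons; exists a, x'; split => //.
exact/Hbs.
Qed.

Lemma has_dim_uniq (P : A -> Prop) n m : has_dim P n -> has_dim P m -> n = m.
Proof.
move=> [s [<- Hs Ps]] [t [<- Ht Pt]]; apply/eqP; rewrite eqn_leq.
apply/andP; split.
  apply: (exchange Hs) => x Hx; apply: (proj1 (Pt x)); apply: (proj2 (Ps x)).
  exact: span_mem.
apply: (exchange Ht) => x Hx; apply: (proj1 (Ps x)); apply: (proj2 (Pt x)).
exact: span_mem.
Qed.

Lemma dimK_eq (P : A -> Prop) n : has_dim P n -> dimK P = n.
Proof.
move=> H.
have H' : has_dim P (dimK P).
  by rewrite /dimK; apply: (epsilon_spec (inhabits 0%nat) (has_dim P)); exists n.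
exact: has_dim_uniq H' H.
Qed.

Definition rk (s : seq A) := dimK (span s).

Lemma rk_basis (s : seq A) :
  exists b, [/\ free_seq b, (forall x, span b x <-> span s x) & rk s = size b].
Proof.
have [b [Hb Hbs _]] := basis_ex s.
exists b; split => //; apply: dimK_eq; exists b; split => // x.
by split => /Hbs.
Qed.

Lemma dimK_span (P : A -> Prop) s : (forall x, P x <-> span s x) -> dimK P = rk s.
Proof.
move=> HP; have [b [Hb Hbs ->]] := rk_basis s.
apply: dimK_eq; exists b; split => // x; split.
  by move=> /HP /Hbs.
by move=> /Hbs /HP.
Qed.

Lemma fin_dim_span (s : seq A) : fin_dim (span s).
Proof.
have [b [Hb Hbs _]] := basis_ex s; exists (size b), b; split => // x.
by split => /Hbs.
Qed.

Lemma rk_size s : (rk s <= size s)%nat.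
Proof.
have [b [Hb Hbs ->]] := rk_basis s; apply: exchange => // x Hx.
by apply/Hbs; exact: span_mem.
Qed.

Lemma rk_free s : free_seq s -> rk s = size s.
Proof. by move=> Hs; apply: dimK_eq; exists s; split. Qed.

Lemma rk_le s t : (forall x, x \in s -> span t x) -> (rk s <= rk t)%nat.
Proof.
move=> Hst.
have [bs [Hbs Hbss ->]] := rk_basis s.
have [bt [Hbt Hbtt ->]] := rk_basis t.
apply: exchange => // x Hx; apply/Hbtt.
apply: (span_trans Hst); apply/Hbss; exact: span_mem.
Qed.

Lemma rk_cat s t : (rk (s ++ t) <= rk s + rk t)%nat.
Proof.
have [bs [Hbs Hbss ->]] := rk_basis s.
have [bt [Hbt Hbtt ->]] := rk_basis t.
rewrite -size_cat; apply: leq_trans (rk_size _); apply: rk_le => x.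
rewrite mem_cat => /orP [Hx|Hx].
  by apply: span_catl; apply/Hbss; exact: span_mem.
by apply: span_catr; apply/Hbtt; exact: span_mem.
Qed.

End Dim.
Section Alg.
Variables (K : fieldType) (A : lmodType K) (mul : A -> A -> A).
Hypothesis mulDl : forall x y z, mul (x + y) z = mul x z + mul y z.
Hypothesis mulDr : forall x y z, mul x (y + z) = mul x y + mul x z.
Hypothesis mulZl : forall (a : K) x y, mul (a *: x) y = a *: mul x y.
Hypothesis mulZr : forall (a : K) x y, mul x (a *: y) = a *: mul x y.

Lemma mul0l y : mul 0 y = 0.
Proof. by apply: (@lin0 _ _ (mul^~ y)) => a x; rewrite mulZl. Qed.

Lemma mul0r x : mul x 0 = 0.
Proof. by apply: (@lin0 _ _ (mul x)) => a y; rewrite mulZr. Qed.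

Lemma span_mul v z x y :
  span v x -> span z y -> span (allpairs mul v z) (mul x y).
Proof.
move=> Hx Hy; move: x Hx; apply: (@span_sub _ _ (fun x => span (allpairs mul v z) (mul x y))).
- by rewrite mul0l; exact: span0.
- by move=> x1 x2 H1 H2; rewrite mulDl; exact: spanD.
- by move=> a x1 H1; rewrite mulZl; exact: spanZ.
move=> x0 Hx0; move: y Hy; apply: (@span_sub _ _ (fun y => span (allpairs mul v z) (mul x0 y))).
- by rewrite mul0r; exact: span0.
- by move=> x1 x2 H1 H2; rewrite mulDr; exact: spanD.
- by move=> a x1 H1; rewrite mulZr; exact: spanZ.
by move=> y0 Hy0; apply: span_mem; apply: allpairs_f.
Qed.

Lemma prod_span (V Z : A -> Prop) v z :
  (forall x, V x <-> span v x) -> (forall x, Z x <-> span z x) ->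
  forall x, prod_space mul V Z x <-> span (allpairs mul v z) x.
Proof.
move=> HV HZ x; split.
  move=> [s [Hs ->]]; elim: s Hs => [|p s IH] Hs; first by rewrite big_nil; exact: span0.
  rewrite big_cons; apply: spanD.
    have [H1 H2] := Hs p (mem_head _ _).
    by apply: span_mul; [apply/HV | apply/HZ].
  by apply: IH => q Hq; apply: Hs; rewrite inE Hq orbT.
move: x; apply: span_sub.
- by exists [::]; split => //; rewrite big_nil.
- move=> x1 x2 [s1 [H1 ->]] [s2 [H2 ->]]; exists (s1 ++ s2); split; last by rewrite big_cat.
  by move=> p; rewrite mem_cat => /orP [Hp|Hp]; [exact: H1 | exact: H2].
- move=> a x1 [s1 [H1 ->]]; exists (map (fun p => (a *: p.1, p.2)) s1); split.
    move=> p /mapP [q Hq ->] /=; have [Hq1 Hq2] := H1 q Hq; split => //.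
    by apply/HV; apply: spanZ; apply/HV.
  by rewrite big_map scaler_sumr; apply: eq_bigr => p _; rewrite mulZl.
move=> y /allpairsP [[p1 p2] [/= Hp1 Hp2 ->]]; exists [:: (p1, p2)]; split.
  move=> p; rewrite inE => /eqP -> /=; split; [apply/HV | apply/HZ]; exact: span_mem.
by rewrite big_seq1.
Qed.

Lemma sum_span (V W : A -> Prop) v w :
  (forall x, V x <-> span v x) -> (forall x, W x <-> span w x) ->
  forall x, sum_space V W x <-> span (v ++ w) x.
Proof.
move=> HV HW x; split.
  move=> [y [z [Hy Hz ->]]]; apply/span_cat; exists y, z; split => //; [apply/HV | apply/HW] => //.
move=> /span_cat [y [z [Hy Hz ->]]]; exists y, z; split => //; [apply/HV | apply/HW] => //.
Qed.

Lemma rmul_span w r x : rmul_space mul (span w) r x <-> span (map (mul^~ r) w) x.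
Proof.
have E := fun x => span_map (f := mul^~ r) w x (fun a b => mulDl a b r) (fun a b => mulZl a b r).
split.
  by move=> [y [Hy ->]]; apply/E; exists y.
by move=> /E [y [Hy ->]]; exists y.
Qed.

Lemma ratio_span w r x :
  sum_space (rmul_space mul (span w) r) (span w) x <-> span (map (mul^~ r) w ++ w) x.
Proof. by apply: sum_span => y; [exact: rmul_span | ]. Qed.

Fixpoint Cs (g : seq A) n : seq A :=
  if n is n'.+1 then g ++ allpairs mul (Cs g n') g else [::].

Lemma Cs_mono g n x : x \in Cs g n -> x \in Cs g n.+1.
Proof.
elim: n x => [|n IH] x; first by rewrite in_nil.
rewrite /= !mem_cat => /orP [->//|/allpairsP [[a b] [/= Ha Hb ->]]].
by apply/orP; right; apply: allpairs_f => //; apply: IH.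
Qed.

Lemma Cs_le g n m x : (n <= m)%nat -> x \in Cs g n -> x \in Cs g m.
Proof.
move=> Hnm; rewrite -(subnK Hnm); elim: (m - n)%nat => [|k IH] Hx; first by rewrite add0n.
by rewrite addSn; apply: Cs_mono; exact: IH.
Qed.

Lemma span_Cs_le g n m x : (n <= m)%nat -> span (Cs g n) x -> span (Cs g m) x.
Proof. by move=> Hnm; apply: span_trans => y Hy; apply: span_mem; exact: Cs_le Hy. Qed.

Lemma Cs_step g k u b : b \in g -> span (Cs g k) u -> span (Cs g k.+1) (mul u b).
Proof.
move=> Hb Hu; have := span_mul Hu (span_mem Hb).
by apply: span_trans => y Hy; apply: span_mem; rewrite /= mem_cat Hy orbT.
Qed.

Hypothesis mulA : forall x y z, mul x (mul y z) = mul (mul x y) z.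

Lemma Cs_mul g m : forall n x y, span (Cs g n) x -> y \in Cs g m -> span (Cs g (n + m)) (mul x y).
Proof.
elim: m => [|m IH] n x y Hx; first by rewrite in_nil.
rewrite /= mem_cat => /orP [Hy|/allpairsP [[a b] [/= Ha Hb ->]]].
  by apply: (span_Cs_le (n := n.+1)); [rewrite addnS ltnS leq_addr | exact: Cs_step].
by rewrite mulA addnS; apply: Cs_step => //; apply: IH.
Qed.

Lemma Cs_mul2 g n m x y : span (Cs g n) x -> span (Cs g m) y -> span (Cs g (n + m)) (mul x y).
Proof.
move=> Hx; move: y; apply: (@span_sub _ _ (fun y => span (Cs g (n + m)) (mul x y))).
- by rewrite mul0r; exact: span0.
- by move=> x1 x2 H1 H2; rewrite mulDr; exact: spanD.
- by move=> a x1 H1; rewrite mulZr; exact: spanZ.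
by move=> y Hy; exact: Cs_mul.
Qed.

Lemma exhaust : (exists gens : seq A, forall S, is_subalgebra mul S ->
    (forall g, g \in gens -> S g) -> forall x, S x) ->
  exists g, forall x, exists n, span (Cs g n) x.
Proof.
move=> [g Hg]; exists g; apply: Hg.
- split; first split.
  + by exists 0%nat; exact: span0.
  + move=> x y [n Hx] [m Hy]; exists (n + m)%nat; apply: spanD.
      by apply: span_Cs_le Hx; rewrite leq_addr.
    by apply: span_Cs_le Hy; rewrite leq_addl.
  + by move=> a x [n Hx]; exists n; exact: spanZ.
  by move=> x y [n Hx] [m Hy]; exists (n + m)%nat; exact: Cs_mul2.
by move=> x Hx; exists 1%nat; apply: span_mem; rewrite /= mem_cat Hx.
Qed.

End Alg.
From Stdlib Require Import Lia.
From mathcomp Require Import zify.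
Section RealLemmas.
Local Open Scope R_scope.

Lemma INR_pos (n : nat) : (0 < n)%nat -> 0 < INR n.
Proof. by move=> /ltP H; apply: lt_0_INR. Qed.

Lemma INR_leq (n m : nat) : (n <= m)%nat -> INR n <= INR m.
Proof. by move=> /leP H; apply: le_INR. Qed.

Lemma INR_ltn (n m : nat) : (n < m)%nat -> INR n < INR m.
Proof. by move=> /ltP H; apply: lt_INR. Qed.

Lemma real1 (n a b : nat) : (0 < b)%nat -> (n.+2 * b < n.+1 * a)%nat ->
  Rlt (Rplus R1 (Rdiv R1 (INR n.+1))) (Rdiv (INR a) (INR b)).
Proof.
move=> /INR_pos Hb /INR_ltn; rewrite !mult_INR.
have HN : 0 < INR n.+1 by apply: INR_pos.
rewrite (S_INR n.+1) => H.
apply: (Rmult_lt_reg_r (INR n.+1 * INR b)); first by apply: Rmult_lt_0_compat.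
replace ((R1 + R1 / INR n.+1) * (INR n.+1 * INR b)) with (INR n.+1 * INR b + INR b)
  by (field; lra).
replace (INR a / INR b * (INR n.+1 * INR b)) with (INR n.+1 * INR a) by (field; lra).
lra.
Qed.

Lemma real2 (m a b : nat) (e : R) : (0 < b)%nat -> (b <= a)%nat -> (m.+1 * a <= m.+3 * b)%nat ->
  Rlt (Rdiv 2 (INR m.+1)) e ->
  Rlt (Rabs (Rminus (Rdiv (INR a) (INR b)) R1)) e.
Proof.
move=> /INR_pos Hb /INR_leq Hab /INR_leq; rewrite !mult_INR.
have HM : 0 < INR m.+1 by apply: INR_pos.
rewrite (S_INR m.+2) (S_INR m.+1) => H He.
have Q1 : 1 <= INR a / INR b.
  apply: (Rmult_le_reg_r (INR b)) => //.
  replace (INR a / INR b * INR b) with (INR a) by (field; lra); lra.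
have Q2 : INR a / INR b - 1 <= 2 / INR m.+1.
  apply: (Rmult_le_reg_r (INR m.+1 * INR b)); first by apply: Rmult_lt_0_compat.
  replace ((INR a / INR b - 1) * (INR m.+1 * INR b)) with (INR m.+1 * INR a - INR m.+1 * INR b)
    by (field; lra).
  replace (2 / INR m.+1 * (INR m.+1 * INR b)) with (2 * INR b) by (field; lra).
  lra.
rewrite Rabs_pos_eq; rewrite /Rminus; lra.
Qed.

Lemma real3 (b : nat) (e : R) : (0 < b)%nat -> Rlt R0 e ->
  Rlt (Rabs (Rminus (Rdiv (INR b) (INR b)) R1)) e.
Proof.
move=> /INR_pos Hb He.
replace (INR b / INR b) with 1 by (field; lra).
rewrite /Rminus Rplus_opp_r Rabs_R0; lra.
Qed.

Lemma arch2 (e : R) : Rlt R0 e -> exists N : nat, forall m : nat, (N <= m)%nat -> Rlt (Rdiv 2 (INR m.+1)) e.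
Proof.
move=> He.
have [N [HN HN0]] := archimed_cor1 (e / 2) ltac:(lra).
exists N => m HNm.
have HNpos : 0 < INR N by apply: lt_0_INR.
have HNm' : INR N <= INR m.+1 by apply: INR_leq; apply: leq_trans HNm _.
have : / INR m.+1 <= / INR N by apply: Rinv_le_contravar.
rewrite /Rdiv; lra.
Qed.

End RealLemmas.
Section Main.
Variables (K : fieldType) (A : lmodType K) (mul : A -> A -> A).
Hypothesis mulDl : forall x y z, mul (x + y) z = mul x z + mul y z.
Hypothesis mulDr : forall x y z, mul x (y + z) = mul x y + mul x z.
Hypothesis mulZl : forall (a : K) x y, mul (a *: x) y = a *: mul x y.
Hypothesis mulZr : forall (a : K) x y, mul x (a *: y) = a *: mul x y.
Hypothesis Hnzd : no_zero_divisors mul.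

Lemma free_head_nz (v0 : A) v : free_seq (v0 :: v) -> v0 <> 0.
Proof.
move=> Hv Hv0.
have H : [:: (1 : K)]`_0 = 0.
  apply: (Hv [:: 1]) => //.
  by rewrite lincomb_cons Hv0 scaler0 add0r /= lincomb0.
by move: H => /= /eqP; rewrite oner_eq0.
Qed.

Lemma free_map_mul (v0 : A) d : v0 <> 0 -> free_seq d -> free_seq (map (mul v0) d).
Proof.
move=> Hv0 Hd c.
have E := lincomb_map (f := mul v0) d c (mulDr v0) (fun a y => mulZr a v0 y).
rewrite -E => /Hnzd [//|H] i; rewrite size_map; exact: Hd.
Qed.

Lemma max_free : ~ (forall k, exists d : seq A, free_seq d /\ size d = k) ->
  exists d : seq A, free_seq d /\ forall x, span d x.
Proof.
move=> Hk.
have H : forall j, (exists d : seq A, free_seq d /\ size d = j) \/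
                   (exists d : seq A, free_seq d /\ forall x, span d x).
  elim=> [|j [[d [Hd Hs]]|IH]]; last by right.
    by left; exists [::]; split => //; exact: free_nil.
  case: (classic (forall x, span d x)) => Hall; first by right; exists d.
  have [x Hx] := not_all_ex_not _ _ Hall.
  by left; exists (x :: d); split; [exact: free_cons | rewrite /= Hs].
apply: NNPP => Hno; apply: Hk => k.
by case: (H k) => // Hr; exfalso; apply: Hno.
Qed.

Hypothesis Hneg : ~ (exists Z : A -> Prop, fin_dim Z /\
  exists eps : R, Rlt R0 eps /\
    forall V : A -> Prop, fin_dim V -> (exists v, V v /\ v <> 0) ->
      Rlt (Rplus R1 eps) (dim_ratio (sum_space (prod_space mul V Z) V) V)).

Lemma folner (z : seq A) (n : nat) : exists v, [/\ free_seq v, (0 < size v)%nat &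
   (n.+1 * rk (allpairs mul v z ++ v) <= n.+2 * size v)%nat].
Proof.
apply: NNPP => Hno; apply: Hneg.
exists (span z); split; first exact: fin_dim_span.
exists (Rdiv R1 (INR n.+1)); split.
  by apply: Rdiv_lt_0_compat; [exact: Rlt_0_1 | apply: INR_pos].
move=> V [m [v [Hsz Hv HV]]] [x [Vx nx]].
have Hm : (0 < size v)%nat.
  case: v Hsz Hv HV => [|v0 v'] // _ _ HV; exfalso; apply: nx.
  by apply/span_nil; exact: (proj1 (HV x) Vx).
have Hr : (n.+2 * size v < n.+1 * rk (allpairs mul v z ++ v))%nat.
  rewrite ltnNge; apply/negP => Hle; apply: Hno; exists v; split => //.
rewrite /dim_ratio (dimK_span (s := allpairs mul v z ++ v)); last first.
  apply: sum_span => // y.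
  exact: (prod_span mulDl mulDr mulZl mulZr HV (fun y => iff_refl _)).
rewrite (dimK_eq (n := size v)); last by exists v; split.
exact: real1.
Qed.

Hypothesis mulA : forall x y z, mul x (mul y z) = mul (mul x y) z.
Hypothesis Hgens : exists gens : seq A, forall S, is_subalgebra mul S ->
    (forall g, g \in gens -> S g) -> forall x, S x.

Lemma main_amen : amenable mul.
Proof.
have [g Hg] := exhaust mulDl mulDr mulZl mulZr mulA Hgens.
case: (classic (forall k, exists d : seq A, free_seq d /\ size d = k)) => [Hinf|Hfin]; last first.
  have [d [Hd Hall]] := max_free Hfin.
  have Hpos : (0 < size d)%nat.
    have [v [Hv Hvpos _]] := folner [::] 0.
    apply: leq_trans Hvpos _; apply: exchange => // x _; exact: Hall.
  exists (fun _ => span d); split.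
  - by move=> _; exact: fin_dim_span.
  - by [].
  - by move=> x; exists 0%nat.
  move=> r e He; exists 0%nat => n _.
  rewrite /dim_ratio (dimK_span (s := map (mul^~ r) d ++ d)); last first.
    exact: (ratio_span mulDl mulZl).
  have -> : rk (map (mul^~ r) d ++ d) = rk d.
    apply/eqP; rewrite eqn_leq; apply/andP; split; apply: rk_le => x Hx; first exact: Hall.
    by apply: span_mem; rewrite mem_cat Hx orbT.
  change (dimK (span d)) with (rk d).
  rewrite (rk_free Hd).
  exact: real3.
pose P := fun n (u v : seq A) => exists z, [/\ (forall x, x \in Cs mul g n -> x \in z), free_seq v,
   (2 * n.+1 * (size u).+1 <= size v)%nat &
   (n.+1 * rk (allpairs mul v z ++ v) <= n.+2 * size v)%nat].
have HP : forall n u, exists v, P n u v.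
  move=> n u.
  have [d [Hd Hsd]] := Hinf (4 * n.+1 * (size u).+1)%nat.
  have [v [Hv Hvpos Hr]] := folner (Cs mul g n ++ d) n.
  exists v, (Cs mul g n ++ d); split => //.
    by move=> x Hx; rewrite mem_cat Hx.
  case: v Hv Hvpos Hr => [//|v0 v'] Hv _ Hr.
  have Hk : (size d <= rk (allpairs mul (v0 :: v') (Cs mul g n ++ d) ++ (v0 :: v')))%nat.
    rewrite -(size_map (mul v0) d) -rk_free; last first.
      by apply: free_map_mul => //; exact: free_head_nz Hv.
    apply: rk_le => x /mapP [y Hy ->]; apply: span_mem.
    by rewrite mem_cat; apply/orP; left; apply: allpairs_f; rewrite ?mem_head // mem_cat Hy orbT.
  rewrite Hsd in Hk.
  move: Hk Hr; set R0 := rk _; set sv := size (v0 :: v'); set su := size u => Hk Hr.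
  nia.
pose F n u := epsilon (inhabits [::]) (P n u).
have HF : forall n u, P n u (F n u) by move=> n u; apply: epsilon_spec; exact: HP.
pose ws := fix ws n := if n is m.+1 then F m (Cs mul g m ++ ws m) ++ (Cs mul g m ++ ws m) else [::].
exists (fun n => span (ws n)); split.
- by move=> n; exact: fin_dim_span.
- move=> n x; apply: span_trans => y Hy; apply: span_mem.
  by rewrite /= !mem_cat Hy !orbT.
- move=> x; have [N HN] := Hg x; exists N.+1.
  move: HN; apply: span_trans => y Hy; apply: span_mem.
  by rewrite /= !mem_cat Hy !orbT.
move=> r e He.
have [N0 HN0] := Hg r.
have [N1 HN1] := arch2 He.
exists (N0 + N1).+1%nat => -[//|m] Hm.
rewrite ltnS in Hm.
set u := (Cs mul g m ++ ws m).
have -> : ws m.+1 = F m u ++ u by [].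
have [z [Hz Hv Hsz Hr]] := HF m u.
move: (F m u) Hv Hsz Hr => v Hv Hsz Hr.
clearbody u.
rewrite /dim_ratio (dimK_span (s := map (mul^~ r) (v ++ u) ++ (v ++ u))); last first.
  exact: (ratio_span mulDl mulZl).
change (dimK (span (v ++ u))) with (rk (v ++ u)).
have Hrz : span z r.
  move: HN0; apply: span_trans => y Hy; apply: span_mem; apply: Hz.
  by apply: Cs_le Hy; apply: leq_trans Hm; rewrite leq_addr.
have Hb : (size v <= rk (v ++ u))%nat.
  by rewrite -(rk_free Hv); apply: rk_le => x Hx; apply: span_mem; rewrite mem_cat Hx.
have Hba : (rk (v ++ u) <= rk (map (mul^~ r) (v ++ u) ++ (v ++ u)))%nat.
  by apply: rk_le => x Hx; apply: span_mem; rewrite mem_cat Hx orbT.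
have Ha1 : (rk (map (mul^~ r) (v ++ u) ++ (v ++ u)) <=
            rk ((allpairs mul v z ++ v) ++ (map (mul^~ r) u ++ u)))%nat.
  apply: rk_le => x; rewrite !mem_cat => /orP [/mapP [y Hy ->]|/orP [Hx|Hx]].
  - move: Hy; rewrite mem_cat => /orP [Hy|Hy].
      apply: span_catl; apply: span_catl.
      exact: (span_mul mulDl mulDr mulZl mulZr (span_mem Hy) Hrz).
    by apply: span_catr; apply: span_mem; rewrite mem_cat map_f.
  - by apply: span_catl; apply: span_catr; exact: span_mem.
  - by apply: span_catr; apply: span_mem; rewrite mem_cat Hx orbT.
have Ha2 : (rk ((allpairs mul v z ++ v) ++ (map (mul^~ r) u ++ u)) <=
            rk (allpairs mul v z ++ v) + (size u + size u))%nat.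
  apply: leq_trans (rk_cat _ _) _; rewrite leq_add2l.
  by apply: leq_trans (rk_size _) _; rewrite size_cat size_map.
have Hvpos : (0 < size v)%nat.
  by apply: leq_trans Hsz; rewrite !muln_gt0.
apply: (real2 (m := m)).
- exact: leq_trans Hvpos Hb.
- exact: Hba.
- move: Ha1 Ha2 Hr Hsz Hb; set a := rk (map _ _ ++ _); set b := rk (v ++ u).
  set R0 := rk (allpairs _ _ _ ++ _); set sv := size v; set su := size u.
  move=> Ha1 Ha2 Hr Hsz Hb.
  nia.
- by apply: HN1; apply: leq_trans Hm; rewrite leq_addl.
Qed.

End Main.
Delimit Scope ring_scope with R.
Theorem lemma1 (K : fieldType) (A : lmodType K) (mul : A -> A -> A) :
  affine_algebra mul -> no_zero_divisors mul -> ~ amenable mul ->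
  exists Z : A -> Prop, fin_dim Z /\
  exists eps : R, Rlt R0 eps /\
    forall V : A -> Prop, fin_dim V -> (exists v, V v /\ v <> 0%R) ->
      Rlt (Rplus R1 eps) (dim_ratio (sum_space (prod_space mul V Z) V) V).
Proof.
move=> [[HmA HmDl HmDr HmZ] Hgens] Hnzd Hna.
apply: NNPP => Hneg; apply: Hna.
exact: (main_amen HmDl HmDr (fun a x y => (HmZ a x y).1) (fun a x y => (HmZ a x y).2) Hnzd Hneg HmA Hgens).
Qed.
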